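(* Assume $\Delta=0$. Let $\lambda_1,\lambda_2,\lambda_3\in K$ be such that $\lambda_ic_i\in N$ for $i=1,2,3$, and let $s_i':=s_i\,\nu_i\in G$, where $\nu_i\in N$ is the element corresponding to $\lambda_ic_i$. Then for every integer $n\ge1$: (1) $(s_1's_2')^n=(s_1s_2)^n\,b_n$ with $b_n\in N$ given by $b_n=u_n(\alpha)\big[(\alpha u_n(\alpha)\lambda_1+u_{n-1}(\alpha)\lambda_2)c_1+\alpha(u_{n+1}(\alpha)\lambda_1+u_n(\alpha)\lambda_2)c_2\big]$ if $n$ is even, and $b_n=u_n(\alpha)\big[(u_n(\alpha)\lambda_1+u_{n-1}(\alpha)\lambda_2)c_1+(\alpha u_{n+1}(\alpha)\lambda_1+u_n(\alpha)\lambda_2)c_2\big]$ if $n$ is odd; (2) $(s_1's_3')^n=(s_1s_3)^n\,b'_n$ with $b'_n=u_n(\beta)\big[(\beta u_n(\beta)\lambda_1+u_{n-1}(\beta)\lambda_3)c_1+\beta(u_{n+1}(\beta)\lambda_1+u_n(\beta)\lambda_3)c_3\big]$ if $n$ is even, and $b'_n=u_n(\beta)\big[(u_n(\beta)\lambda_1+u_{n-1}(\beta)\lambda_3)c_1+(\beta u_{n+1}(\beta)\lambda_1+u_n(\beta)\lambda_3)c_3\big]$ if $n$ is odd; (3) $(s_2's_3')^n=(s_2s_3)^n\,b''_n$ with $b''_n=u_n(\gamma)\big[(\gamma u_n(\gamma)\lambda_2+m u_{n-1}(\gamma)\lambda_3)c_2+(l u_{n+1}(\gamma)\lambda_2+\gamma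 u_n(\gamma)\lambda_3)c_3\big]$ if $n$ is even, and $b''_n=u_n(\gamma)\big[(u_n(\gamma)\lambda_2+m u_{n-1}(\gamma)\lambda_3)c_2+(l u_{n+1}(\gamma)\lambda_2+u_n(\gamma)\lambda_3)c_3\big]$ if $n$ is odd. (Products of elements of $G$ are written multiplicatively; elements of $N$ are identified with vectors of $K^2$.)
   Context: Setting. Let $p,q,r\ge 3$ be integers and $W=W(p,q,r)$ the Coxeter group with generators $s_1,s_2,s_3$ and relations $s_i^2=1$, $(s_1s_2)^p=(s_1s_3)^q=(s_2s_3)^r=1$. Let $\alpha=4\cos^2(\pi k_1/p)$, $\beta=4\cos^2(\pi k_2/q)$, $\gamma=4\cos^2(\pi k_3/r)$ with $\gcd(k_1,p)=\gcd(k_2,q)=\gcd(k_3,r)=1$ (so $0<\alpha,\beta,\gamma<4$), and let $l,m\in\mathbb{C}$ with $lm=\gamma$. Let $K\subset\mathbb{C}$ be a field containing $\alpha,\beta,\gamma,l,m$, and $M$ a $3$-dimensional $K$-vector space with basis $(a_1,a_2,a_3)$. The reflection representation $R:W\to GL(M)$ with parameters $(\alpha,\beta,\gamma;l,m)$ is defined by: for $x=\lambda_1a_1+\lambda_2a_2+\lambda_3a_3$, $R(s_1)x=x-(2\lambda_1-\alpha\lambda_2-\beta\lambda_3)a_1$, $R(s_2)x=x-(-\lambda_1+2\lambda_2-l\lambda_3)a_2$, $R(s_3)x=x-(-\lambda_1-m\lambda_2+2\lambda_3)a_3$. Put $G=R(W)$ and write $s_i$ for $R(s_i)$. Let $\Delta=8-2\alpha-2\beta-2\gamma-(\alpha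 l+\beta m)$; $R$ is reducible iff $\Delta=0$. Reducible setting. Assume $\Delta=0$. Put $b=(4-\gamma)a_1+(l+2)a_2+(m+2)a_3$; then the space of $G$-fixed vectors is $C_M(G)=Kb$ and $(b,a_2,a_3)$ is a basis of $M$. Let $N=N(G)$ be the subgroup of elements of $G$ acting trivially on $M/C_M(G)$. Each $\zeta\in N$ satisfies $\zeta(b)=b$, $\zeta(a_2)=a_2+\lambda b$, $\zeta(a_3)=a_3+\mu b$ for a unique $(\lambda,\mu)\in K^2$; the map $\zeta\mapsto(\lambda,\mu)$ is an injective group homomorphism $N\to (K^2,+)$, through which $N$ is identified with an additive subgroup of $K^2$ (and written additively). Put $c_1=(\alpha,\beta)$, $c_2=(-2,l)$, $c_3=(m,-2)\in K^2$ and, for $\zeta=(\lambda,\mu)\in K^2$, $\omega(\zeta)=-\frac{\lambda(l+2)+\mu(m+2)}{4-\gamma}$. Polynomials $u_n$. Define $u_n\in\mathbb{Z}[X]$ for $n\ge-1$ by $u_{-1}=-1$, $u_0=0$, and for $n\ge0$: $u_{n+1}=Xu_n-u_{n-1}$ if $n$ is even, $u_{n+1}=u_n-u_{n-1}$ if $n$ is odd (so $u_1=u_2=1$, $u_3=X-1$). *)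

(* Defs.v *)
From HB Require Import structures.
From mathcomp Require Import all_boot all_order all_algebra.
Set Implicit Arguments. Unset Strict Implicit. Unset Printing Implicit Defensive.
Import Order.TTheory GRing.Theory Num.Theory.
Local Open Scope ring_scope.

(* Polynomials u_n (n >= -1) in Z[X]: upair n = (u_{n-1}, u_n). *)
Fixpoint upair (n : nat) : {poly int} * {poly int} :=
  match n with
  | 0 => (-1, 0)
  | n'.+1 => let (a, b) := upair n' in
             (b, if odd n' then b - a else 'X * b - a)
  end.

Definition upoly (n : nat) : {poly int} := (upair n).2.

Definition uev (R : nzRingType) (x : R) (n : nat) : R :=
  (map_poly (fun z : int => z%:~R) (upoly n)).[x].

(* M = R^3 as column vectors, basis a_1 a_2 a_3 = standard basis. *)
Definition rv3 (R : nzRingType) (a b c : R) : 'rV[R]_3 :=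
  \row_(j < 3) [:: a; b; c]`_j.

Definition refl3 (R : nzRingType) (i0 : 'I_3) (v : 'rV[R]_3) : 'M[R]_3 :=
  1%:M - delta_mx i0 (0 : 'I_1) *m v.

Definition sg1 (R : nzRingType) (al be : R) : 'M[R]_3 :=
  refl3 (inord 0) (rv3 2 (- al) (- be)).
Definition sg2 (R : nzRingType) (l : R) : 'M[R]_3 :=
  refl3 (inord 1) (rv3 (-1) 2 (- l)).
Definition sg3 (R : nzRingType) (m : R) : 'M[R]_3 :=
  refl3 (inord 2) (rv3 (-1) (- m) 2).

Inductive gen_group (R : fieldType) (S : seq 'M[R]_3) : 'M[R]_3 -> Prop :=
  | gg_gen A : A \in S -> gen_group S A
  | gg_one : gen_group S 1
  | gg_mul A B : gen_group S A -> gen_group S B -> gen_group S (A * B)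
  | gg_inv A : gen_group S A -> gen_group S (invmx A).

Definition Ggrp (R : fieldType) (al be l m : R) : 'M[R]_3 -> Prop :=
  gen_group [:: sg1 al be; sg2 l; sg3 m].

Definition bvec (R : nzRingType) (ga l m : R) : 'cV[R]_3 :=
  \col_(i < 3) [:: 4 - ga; l + 2; m + 2]`_i.

Definition Pbasis (R : nzRingType) (ga l m : R) : 'M[R]_3 :=
  \matrix_(i < 3, j < 3)
    (if j == 0 :> nat then bvec ga l m i 0 else (i == j)%:R).

(* The element of GL(M) corresponding to zeta = (lambda, mu) in K^2:
   b |-> b, a2 |-> a2 + lambda b, a3 |-> a3 + mu b. *)
Definition nuT (R : fieldType) (ga l m : R) (z : 'rV[R]_2) : 'M[R]_3 :=
  let E := \matrix_(i < 3, j < 3)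
      ((i == j)%:R
       + ((i == 0 :> nat) && (j == 1 :> nat))%:R * z 0 (inord 0)
       + ((i == 0 :> nat) && (j == 2 :> nat))%:R * z 0 (inord 1)) in
  Pbasis ga l m * E * invmx (Pbasis ga l m).

(* zeta \in N  (N identified with an additive subgroup of K^2) *)
Definition inN (R : fieldType) (al be ga l m : R) (z : 'rV[R]_2) : Prop :=
  Ggrp al be l m (nuT ga l m z).

Definition rv2 (R : nzRingType) (a b : R) : 'rV[R]_2 := \row_(j < 2) [:: a; b]`_j.
Definition c1 (R : nzRingType) (al be : R) : 'rV[R]_2 := rv2 al be.
Definition c2 (R : nzRingType) (l : R) : 'rV[R]_2 := rv2 (-2) l.
Definition c3 (R : nzRingType) (m : R) : 'rV[R]_2 := rv2 m (-2).

(* b_n, b'_n (generic form): x = alpha or beta, la = lambda_1,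
   mu = lambda_2 or lambda_3, d = c_2 or c_3 *)
Definition bn (R : nzRingType) (x la mu : R) (c d : 'rV[R]_2) (n : nat) : 'rV[R]_2 :=
  if odd n then
    uev x n *: ((uev x n * la + uev x n.-1 * mu) *: c
                + (x * uev x n.+1 * la + uev x n * mu) *: d)
  else
    uev x n *: ((x * uev x n * la + uev x n.-1 * mu) *: c
                + x *: ((uev x n.+1 * la + uev x n * mu) *: d)).

Definition bn'' (R : nzRingType) (ga l m la2 la3 : R) (n : nat) : 'rV[R]_2 :=
  if odd n then
    uev ga n *: ((uev ga n * la2 + m * uev ga n.-1 * la3) *: c2 l
                 + (l * uev ga n.+1 * la2 + uev ga n * la3) *: c3 m)
  else
    uev ga n *: ((ga * uev ga n * la2 + m * uev ga n.-1 * la3) *: c2 l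
                 + (l * uev ga n.+1 * la2 + ga * uev ga n * la3) *: c3 m).

(* Main.v *)
Require Import Defs.
From HB Require Import structures.
From mathcomp Require Import all_boot all_order all_algebra.
From mathcomp Require Import ring.
Import Order.TTheory GRing.Theory Num.Theory.
Set Implicit Arguments. Unset Strict Implicit.
Local Open Scope ring_scope.

Section U.
Variable R : comNzRingType.
Definition uevm (x : R) n := (map_poly (fun z : int => z%:~R) (upair n).1).[x].
Lemma upairS n : upair n.+1 = ((upair n).2,
   if odd n then (upair n).2 - (upair n).1 else 'X * (upair n).2 - (upair n).1).
Proof. by rewrite /=; case: (upair n). Qed.
Lemma uevS (x : R) n : uev x n.+1 =
  if odd n then uev x n - uevm x n else x * uev x n - uevm x n.
Proof.
rewrite /uev /uevm /upoly upairS /=; case: (odd n).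
  by rewrite rmorphB hornerD hornerN.
rewrite rmorphB rmorphM /= map_polyX hornerD hornerN mulrC hornerMX; ring.
Qed.
Lemma uevmS (x : R) n : uevm x n.+1 = uev x n.
Proof. by rewrite /uev /uevm /upoly upairS. Qed.
Lemma uev0 (x : R) : uev x 0 = 0.
Proof. by rewrite /uev /upoly /= rmorph0 horner0. Qed.
Lemma uevm0 (x : R) : uevm x 0 = -1.
Proof. by rewrite /uevm /= rmorphN rmorph1 hornerN hornerC. Qed.
End U.


Section Gen.
Variable R : comNzRingType.
Lemma mE (A B : 'M[R]_3) : A * B = A *m B. Proof. by []. Qed.
Lemma QQ (b : 'cV[R]_3) (w w' : 'rV_3) : w *m b = 0 ->
  (1 + b *m w) * (1 + b *m w') = 1 + b *m (w + w') :> 'M_3.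
Proof.
move=> wb; rewrite mulrDl !mulrDr !mul1r mulr1 mE.
by rewrite mulmxA -(mulmxA b) wb mulmx0 mul0mx addr0 mulmxDr addrA addrAC.
Qed.
Lemma Qs (b : 'cV[R]_3) (w : 'rV_3) (s : 'M_3) : s *m b = b ->
  (1 + b *m w) * s = s * (1 + b *m (w *m s)) :> 'M_3.
Proof.
move=> sb; rewrite mulrDl mulrDr mul1r mulr1 !mE mulmxA sb mulmxA.
done.
Qed.

Variables (s t : 'M[R]_3) (b : 'cV[R]_3) (w1 w2 : 'rV[R]_3).
Fixpoint Wf n := if n is n'.+1 then (Wf n' *m s + w1) *m t + w2 else 0.
Hypotheses (sb : s *m b = b) (tb : t *m b = b) (w1b : w1 *m b = 0) (w2b : w2 *m b = 0).
Lemma Wb n : Wf n *m b = 0.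
Proof.
elim: n => [|n IH] /=; first by rewrite mul0mx.
by rewrite mulmxDl w2b addr0 -mulmxA tb mulmxDl w1b addr0 -mulmxA sb.
Qed.
Lemma powQ n : (s * (1 + b *m w1) * (t * (1 + b *m w2)))^+n
   = (s*t)^+n * (1 + b *m Wf n).
Proof.
elim: n => [|n IH]; first by rewrite !expr0 /= mulmx0 addr0 mulr1.
rewrite exprSr IH exprSr /=.
rewrite !mulrA -(mulrA _ _ s) Qs // mulrA -(mulrA _ (1 + b *m (Wf n *m s))) QQ;
  last by rewrite -mulmxA sb Wb.
rewrite -(mulrA _ _ t) Qs // mulrA -(mulrA _ (1 + _ *m ((_ + w1) *m t))) QQ //.
by rewrite -mulmxA tb mulmxDl w1b addr0 -mulmxA sb Wb.
Qed.


End Gen.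

Lemma invpow (R : comNzRingType) (s t : 'M[R]_3) n :
  s * s = 1 -> t * t = 1 -> (t * s)^+n * (s * t)^+n = 1.
Proof.
move=> ss tt; elim: n => [|n IH]; first by rewrite !expr0 mulr1.
rewrite exprSr exprS -mulrA (mulrA (t * s)) -(mulrA t) (mulrA s) ss mul1r tt mul1r.
exact: IH.
Qed.


Section Coord.
Variable R : comNzRingType.
Variables (s t : 'M[R]_3) (v v' : 'rV[R]_3) (p q la1 la2 : R).
Hypotheses (vs : v *m s = - v) (v's : v' *m s = v' + p *: v)
  (vt : v *m t = v + q *: v') (v't : v' *m t = - v').
Fixpoint XY n : R * R := if n is n'.+1 then
  let: (X, Y) := XY n' in let A := p * Y - X + la1 in (A, q * A - Y + la2)
  else (0, 0).
Lemma W_XY n : Wf s t (- (la1 *: v)) (- (la2 *: v')) n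
   = - ((XY n).1 *: v + (XY n).2 *: v').
Proof.
elim: n => [|n IH] /=; first by rewrite !scale0r addr0 oppr0.
rewrite IH; case: (XY n) => X Y /=.
rewrite !(mulNmx, mulmxDl, mulmxBl, (=^~scalemxAl), vs, vt, v's, v't).

apply/rowP=> j; rewrite !mxE; move: (v 0 j) (v' 0 j) => a b; ring.
Qed.

Lemma lc (c I E F : R) : I = 1 -> E - F = c * (1 - I) -> E = F.
Proof. by move=> -> /eqP; rewrite subrr mulr0 subr_eq0 => /eqP. Qed.


Lemma XY_closed n :
  [/\ (if odd n then uev (p*q) n ^+ 2 + (p*q) * uevm (p*q) n ^+ 2 - (p*q) * uevm (p*q) n * uev (p*q) n
       else (p*q) * uev (p*q) n ^+ 2 + uevm (p*q) n ^+ 2 - (p*q) * uevm (p*q) n * uev (p*q) n) = 1,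
      (XY n).1 = if odd n then uev (p*q) n * (uev (p*q) n * la1 + p * uevm (p*q) n * la2)
                 else uev (p*q) n * ((p*q) * uev (p*q) n * la1 + p * uevm (p*q) n * la2)
    & (XY n).2 = if odd n then uev (p*q) n * (q * uev (p*q) n.+1 * la1 + uev (p*q) n * la2)
                 else uev (p*q) n * (q * uev (p*q) n.+1 * la1 + (p*q) * uev (p*q) n * la2)].
Proof.
elim: n => [|n [I1 I2 I3]].
  by rewrite /= uev0 uevm0; split; ring.
have ->: XY n.+1 = (p * (XY n).2 - (XY n).1 + la1,
    q * (p * (XY n).2 - (XY n).1 + la1) - (XY n).2 + la2).
  by rewrite /=; case: (XY n).
rewrite /= I2 I3.
rewrite !uevS /= !uevmS; move: I1.
case: (odd n) => /= I1.
- split.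
  + by apply: (lc (c:=-1) I1); ring.
  + by apply: (lc (c:=la1) I1); ring.
  + by apply: (lc (c:=q * la1 + la2) I1); ring.
- split.
  + by apply: (lc (c:=-1) I1); ring.
  + by apply: (lc (c:=la1) I1); ring.
  + by apply: (lc (c:=q * la1 + la2) I1); ring.
Qed.
End Coord.


Ltac ordc i := let H := fresh "H" in case: i => [[|[|[|i]]] H] //.
Ltac mxsimp := rewrite ?(mxE, big_ord_recl, big_ord0) /=.

Section Conc.
Variable R : fieldType.
Variables al be ga l m : R.
Definition v1 := rv3 2 (-al) (-be).
Definition v2 := rv3 (-1) 2 (-l).
Definition v3 := rv3 (-1) (-m) 2.
Ltac mxt := apply/matrixP=> [[[|[|[|?]]] ?]] [[|[|[|?]]] ?] //;
  rewrite /sg1 /sg2 /sg3 /refl3 /v1 /v2 /v3 /rv3 /bvec; mxsimp;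
  rewrite -?val_eqE /= ?inordK //=.

Lemma s1s1 : sg1 al be * sg1 al be = 1. Proof. by rewrite mE; mxt; ring. Qed.
Lemma s2s2 : sg2 l * sg2 l = 1. Proof. by rewrite mE; mxt; ring. Qed.
Lemma s3s3 : sg3 m * sg3 m = 1. Proof. by rewrite mE; mxt; ring. Qed.
Lemma v1s1 : v1 *m sg1 al be = - v1. Proof. by mxt; ring. Qed.
Lemma v2s1 : v2 *m sg1 al be = v2 + 1 *: v1. Proof. by mxt; ring. Qed.
Lemma v3s1 : v3 *m sg1 al be = v3 + 1 *: v1. Proof. by mxt; ring. Qed.
Lemma v1s2 : v1 *m sg2 l = v1 + al *: v2. Proof. by mxt; ring. Qed.
Lemma v2s2 : v2 *m sg2 l = - v2. Proof. by mxt; ring. Qed.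
Lemma v3s2 : v3 *m sg2 l = v3 + m *: v2. Proof. by mxt; ring. Qed.
Lemma v1s3 : v1 *m sg3 m = v1 + be *: v3. Proof. by mxt; ring. Qed.
Lemma v2s3 : v2 *m sg3 m = v2 + l *: v3. Proof. by mxt; ring. Qed.
Lemma v3s3 : v3 *m sg3 m = - v3. Proof. by mxt; ring. Qed.

Hypothesis hD : 8 - 2 * al - 2 * be - 2 * ga - (al * l + be * m) = 0.
Hypothesis hlm : l * m = ga.
Lemma v1b : v1 *m bvec ga l m = 0.
Proof. mxt; apply: (etrans _ hD); ring. Qed.
Lemma v2b : v2 *m bvec ga l m = 0.
Proof. mxt; apply: (etrans _ (subrr ga)); rewrite -{1}hlm; ring. Qed.
Lemma v3b : v3 *m bvec ga l m = 0.
Proof. mxt; apply: (etrans _ (subrr ga)); rewrite -{1}hlm; ring. Qed.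

Lemma sbE (i : 'I_3) (v : 'rV_3) : v *m bvec ga l m = 0 ->
  refl3 i v *m bvec ga l m = bvec ga l m.
Proof. by move=> vb; rewrite /refl3 mulmxBl mul1mx -mulmxA vb mulmx0 subr0. Qed.
Lemma s1b : sg1 al be *m bvec ga l m = bvec ga l m. Proof. exact: sbE v1b. Qed.
Lemma s2b : sg2 l *m bvec ga l m = bvec ga l m. Proof. exact: sbE v2b. Qed.
Lemma s3b : sg3 m *m bvec ga l m = bvec ga l m. Proof. exact: sbE v3b. Qed.

Definition Emat (z : 'rV[R]_2) : 'M[R]_3 := \matrix_(i < 3, j < 3)
      ((i == j)%:R
       + ((i == 0 :> nat) && (j == 1 :> nat))%:R * z 0 (inord 0)
       + ((i == 0 :> nat) && (j == 2 :> nat))%:R * z 0 (inord 1)).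
Lemma nuTE z : nuT ga l m z = Pbasis ga l m * Emat z * invmx (Pbasis ga l m).
Proof. by []. Qed.
Definition e1c : 'cV[R]_3 := \col_(i < 3) [:: 1; 0; 0]`_i.
Definition zr (z : 'rV[R]_2) := rv3 0 (z 0 (inord 0)) (z 0 (inord 1)).
Definition E23 : 'M[R]_3 := \matrix_(i < 3, j < 3) ((i == j) && (i != 0 :> nat))%:R.
Ltac mxt2 := apply/matrixP=> [[[|[|[|?]]] ?]] [[|[|[|?]]] ?] //;
  rewrite /Emat /e1c /zr /E23 /Pbasis /rv3 /bvec; mxsimp;
  rewrite -?val_eqE /= ?inordK //=.
Lemma Esplit z : Emat z = 1%:M + e1c *m zr z.
Proof. by mxt2; ring. Qed.
Lemma Psplit : Pbasis ga l m = bvec ga l m *m rv3 1 0 0 + E23.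
Proof. by mxt2; rewrite /rv3; mxsimp; ring. Qed.
Lemma Pe1 : Pbasis ga l m *m e1c = bvec ga l m.
Proof. by mxt2; ring. Qed.

Hypothesis hd : 4 - ga != 0.
Definition Pinv : 'M[R]_3 := \matrix_(i < 3, j < 3)
  nth 0 (nth [::] [:: [:: (4 - ga)^-1; 0; 0]; [:: - (l + 2) / (4 - ga); 1; 0];
      [:: - (m + 2) / (4 - ga); 0; 1]] i) j.
Lemma PPinv : Pbasis ga l m *m Pinv = 1%:M.
Proof. by mxt2; rewrite /Pinv; mxsimp; field. Qed.
Lemma Punit : Pbasis ga l m \in unitmx.
Proof. by case: (mulmx1_unit PPinv). Qed.

Lemma nuTQ z w : w *m bvec ga l m = 0 -> zr z = w *m E23 ->
  nuT ga l m z = 1 + bvec ga l m *m w.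
Proof.
move=> wb zw; rewrite nuTE !mE Esplit mulmxDr mulmx1 mulmxA Pe1 zw.
have -> : Pbasis ga l m + bvec ga l m *m (w *m E23)
   = (1%:M + bvec ga l m *m w) *m Pbasis ga l m.
  rewrite mulmxDl mul1mx; congr (_ + _).
  by rewrite Psplit mulmxDr -!mulmxA (mulmxA w) wb mul0mx mulmx0 add0r.
by rewrite -mulmxA mulmxV ?Punit // mulmx1.
Qed.

Lemma nuT_comb X Y Z :
  nuT ga l m (X *: c1 al be + Y *: c2 l + Z *: c3 m)
  = 1 + bvec ga l m *m (- (X *: v1 + Y *: v2 + Z *: v3)).
Proof.
apply: nuTQ.
  by rewrite mulNmx !mulmxDl -!scalemxAl v1b v2b v3b !scaler0 !addr0 oppr0.
by mxt2; rewrite /c1 /c2 /c3 /rv2 /v1 /v2 /v3 /rv3; mxsimp; rewrite ?inordK //=; ring.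
Qed.
End Conc.

Lemma ga_neq4 (C : numClosedFieldType) (r k : nat) : (3 <= r)%N -> coprime k r ->
  4 - 4 * ('Re (r.-root (-1) ^+ k)) ^+ 2 != 0 :> C.
Proof.
move=> hr hk; set z := r.-root (-1 : C).
have r0 : (0 < r)%N by apply: leq_trans hr.
have hz : z ^+ r = -1 by rewrite /z rootCK.
have nz : `|z| = 1.
  by apply/eqP; rewrite -(@pexpr_eq1 _ _ r) // -normrX hz normrN normr1.
have nw : `|z ^+ k| = 1 by rewrite normrX nz expr1n.
apply/negP => /eqP h.
have hRe : 'Re (z ^+ k) ^+ 2 = 1.
  have : 4 * (1 - 'Re (z ^+ k) ^+ 2) = 0 by rewrite -h; ring.
  by move/eqP; rewrite mulf_eq0 pnatr_eq0 /= subr_eq0 => /eqP <-.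
have hIm : 'Im (z ^+ k) = 0.
  have := normC2_Re_Im (z ^+ k); rewrite nw hRe expr1n => /eqP.
  by rewrite -subr_eq0 opprD addrA subrr add0r oppr_eq0 expf_eq0 /= => /eqP.
have w2 : z ^+ (k * 2) = 1.
  by rewrite exprM [z ^+ k]Crect hIm mulr0 addr0.
have z2r : z ^+ (r * 2) = 1 by rewrite exprM hz sqrrN expr1n.
have [a _ /dvdnP [c hc]] := Bezoutl k r0.
have : z ^+ 2 = 1.
  have e1 : z ^+ ((gcdn r k + a * k) * 2) = 1 by rewrite hc -mulnA (mulnC c) exprM z2r expr1n.
  move: e1; rewrite gcdnC (eqP hk) mulnDl exprD mul1n -mulnA mulnC exprM w2 expr1n mulr1.
  done.
move/eqP; rewrite sqrf_eq1 => /orP [] /eqP hz1.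
  move: hz; rewrite hz1 expr1n => /eqP; by rewrite -subr_eq0 opprK -mulr2n pnatr_eq0.
have := rootC_lt0 (-1 : C) (leq_trans (isT : (1 < 3)%N) hr).
by rewrite -/z hz1 ltrN10.
Qed.

Lemma gg_pow (R : fieldType) (S : seq 'M[R]_3) A n : gen_group S A -> gen_group S (A ^+ n).
Proof.
move=> hA; elim: n => [|n IH]; first by rewrite expr0; exact: gg_one.
by rewrite exprS; apply: gg_mul.
Qed.

Lemma case_gen (R : fieldType) (S : seq 'M[R]_3) (s t : 'M_3) (b : 'cV_3)
  (v v' : 'rV_3) (p q la1 la2 : R) (N : 'rV[R]_2 -> 'M[R]_3) (cc cc' : 'rV_2) :
 (forall X Y, N (X *: cc + Y *: cc') = 1 + b *m (-(X *: v + Y *: v'))) ->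
 v *m s = -v -> v' *m s = v' + p *: v -> v *m t = v + q *: v' -> v' *m t = -v' ->
 s *m b = b -> t *m b = b -> v *m b = 0 -> v' *m b = 0 ->
 s * s = 1 -> t * t = 1 -> gen_group S s -> gen_group S t ->
 gen_group S (N (la1 *: cc)) -> gen_group S (N (la2 *: cc')) ->
 forall n, gen_group S (N ((XY p q la1 la2 n).1 *: cc + (XY p q la1 la2 n).2 *: cc'))
   /\ (s * N (la1 *: cc) * (t * N (la2 *: cc')))^+n
      = (s*t)^+n * N ((XY p q la1 la2 n).1 *: cc + (XY p q la1 la2 n).2 *: cc').
Proof.
move=> hN vs v's vt v't sb tb vb v'b ss tt Gs Gt G1 G2 n.
have e1 : N (la1 *: cc) = 1 + b *m (- (la1 *: v)).
  by have := hN la1 0; rewrite !scale0r !addr0.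
have e2 : N (la2 *: cc') = 1 + b *m (- (la2 *: v')).
  by have := hN 0 la2; rewrite !scale0r !add0r.
have w1b : - (la1 *: v) *m b = 0 by rewrite mulNmx -scalemxAl vb scaler0 oppr0.
have w2b : - (la2 *: v') *m b = 0 by rewrite mulNmx -scalemxAl v'b scaler0 oppr0.
have eq : (s * N (la1 *: cc) * (t * N (la2 *: cc')))^+n
      = (s*t)^+n * N ((XY p q la1 la2 n).1 *: cc + (XY p q la1 la2 n).2 *: cc').
  by rewrite e1 e2 (powQ sb tb w1b w2b) (W_XY _ _ vs v's vt v't) hN.
split=> //.
rewrite -[N _]mul1r -(invpow n ss tt) -mulrA -eq.
apply: gg_mul; first by apply: gg_pow; apply: gg_mul.
by apply: gg_pow; apply: gg_mul; apply: gg_mul.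
Qed.

Theorem proposition3 (C : numClosedFieldType)
  (p q r k1 k2 k3 : nat)
  (hp : (3 <= p)%N) (hq : (3 <= q)%N) (hr : (3 <= r)%N)
  (hk1 : coprime k1 p) (hk2 : coprime k2 q) (hk3 : coprime k3 r)
  (al be ga l m : C)
  (hal : al = 4 * ('Re (p.-root (-1) ^+ k1)) ^+ 2)
  (hbe : be = 4 * ('Re (q.-root (-1) ^+ k2)) ^+ 2)
  (hga : ga = 4 * ('Re (r.-root (-1) ^+ k3)) ^+ 2)
  (hlm : l * m = ga)
  (K : {pred C}) (hK : GRing.divring_closed K)
  (Kal : al \in K) (Kbe : be \in K) (Kga : ga \in K) (Kl : l \in K) (Km : m \in K)
  (hDelta : 8 - 2 * al - 2 * be - 2 * ga - (al * l + be * m) = 0)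
  (la1 la2 la3 : C) (Kla1 : la1 \in K) (Kla2 : la2 \in K) (Kla3 : la3 \in K)
  (hN1 : inN al be ga l m (la1 *: c1 al be))
  (hN2 : inN al be ga l m (la2 *: c2 l))
  (hN3 : inN al be ga l m (la3 *: c3 m)) :
  let s1 := sg1 al be in let s2 := sg2 l in let s3 := sg3 m in
  let s1' := s1 * nuT ga l m (la1 *: c1 al be) in
  let s2' := s2 * nuT ga l m (la2 *: c2 l) in
  let s3' := s3 * nuT ga l m (la3 *: c3 m) in
  forall n : nat, (1 <= n)%N ->
    [/\ inN al be ga l m (bn al la1 la2 (c1 al be) (c2 l) n)
        /\ (s1' * s2') ^+ n = (s1 * s2) ^+ n * nuT ga l m (bn al la1 la2 (c1 al be) (c2 l) n),
        inN al be ga l m (bn be la1 la3 (c1 al be) (c3 m) n)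
        /\ (s1' * s3') ^+ n = (s1 * s3) ^+ n * nuT ga l m (bn be la1 la3 (c1 al be) (c3 m) n)
      & inN al be ga l m (bn'' ga l m la2 la3 n)
        /\ (s2' * s3') ^+ n = (s2 * s3) ^+ n * nuT ga l m (bn'' ga l m la2 la3 n)].
Proof.
move=> s1 s2 s3 s1' s2' s3' n hn.
have hd : 4 - ga != 0 by rewrite hga; exact: ga_neq4.
have G1 : Ggrp al be l m s1 by apply: gg_gen; rewrite !inE eqxx.
have G2 : Ggrp al be l m s2 by apply: gg_gen; rewrite !inE eqxx ?orbT.
have G3 : Ggrp al be l m s3 by apply: gg_gen; rewrite !inE eqxx ?orbT.
have comb := nuT_comb hDelta hlm hd.
have h12 : forall X Y, nuT ga l m (X *: c1 al be + Y *: c2 l)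
    = 1 + bvec ga l m *m (- (X *: v1 al be + Y *: v2 l)).
  by move=> X Y; have := comb X Y 0; rewrite !scale0r !addr0.
have h13 : forall X Y, nuT ga l m (X *: c1 al be + Y *: c3 m)
    = 1 + bvec ga l m *m (- (X *: v1 al be + Y *: v3 m)).
  by move=> X Y; have := comb X 0 Y; rewrite !scale0r !addr0.
have h23 : forall X Y, nuT ga l m (X *: c2 l + Y *: c3 m)
    = 1 + bvec ga l m *m (- (X *: v2 l + Y *: v3 m)).
  by move=> X Y; have := comb 0 X Y; rewrite !scale0r !add0r.
case: n hn => // n' _.
have bn1 : bn al la1 la2 (c1 al be) (c2 l) n'.+1
   = (XY 1 al la1 la2 n'.+1).1 *: c1 al be + (XY 1 al la1 la2 n'.+1).2 *: c2 l.
  case: (XY_closed 1 al la1 la2 n'.+1) => _ -> ->; rewrite /bn !mul1r uevmS /=.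
  by case: (odd n') => /=; apply/rowP=> j; rewrite !mxE; ring.
have bn2 : bn be la1 la3 (c1 al be) (c3 m) n'.+1
   = (XY 1 be la1 la3 n'.+1).1 *: c1 al be + (XY 1 be la1 la3 n'.+1).2 *: c3 m.
  case: (XY_closed 1 be la1 la3 n'.+1) => _ -> ->; rewrite /bn !mul1r uevmS /=.
  by case: (odd n') => /=; apply/rowP=> j; rewrite !mxE; ring.
have bn3 : bn'' ga l m la2 la3 n'.+1
   = (XY m l la2 la3 n'.+1).1 *: c2 l + (XY m l la2 la3 n'.+1).2 *: c3 m.
  case: (XY_closed m l la2 la3 n'.+1) => _ -> ->.
  rewrite /bn'' [m * l]mulrC hlm uevmS /=.
  by case: (odd n') => /=; apply/rowP=> j; rewrite !mxE; ring.
rewrite bn1 bn2 bn3; split.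
- apply: case_gen => //.
  + exact: v1s1. + exact: v2s1. + exact: v1s2. + exact: v2s2.
  + exact: s1b. + exact: s2b. + exact: v1b. + exact: v2b.
  + exact: s1s1. + exact: s2s2.
- apply: case_gen => //.
  + exact: v1s1. + exact: v3s1. + exact: v1s3. + exact: v3s3.
  + exact: s1b. + exact: s3b. + exact: v1b. + exact: v3b.
  + exact: s1s1. + exact: s3s3.
- apply: case_gen => //.
  + exact: v2s2. + exact: v3s2. + exact: v2s3. + exact: v3s3.
  + exact: s2b. + exact: s3b. + exact: v2b. + exact: v3b.
  + exact: s2s2. + exact: s3s3.
Qed.
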